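(* Let $n\ge1$ and define $\phi(x_j)=I_{n+1}+E_{j+1,j}$ and $\phi(y_j)=I_{n+1}+E_{j,j+1}$ in $\mathrm{GL}_{n+1}(\mathbb{F}_2)$ for $1\le j\le n$. Then the map $\phi$ on $\{x_1,\dots,x_n,y_1,\dots,y_n\}$ extends to a group homomorphism $\phi\colon\langle A_{2,n}\rangle\to\mathrm{GL}_{n+1}(\mathbb{F}_2)$.
   Context: $E_{i,j}$ is the matrix with $1$ in row $i$, column $j$ and $0$ elsewhere. The group $\langle A_{2,n}\rangle$ has generators $X=\{x_1,\dots,x_n,y_1,\dots,y_n\}$ and defining relations: $z^2=e$ for all $z\in X$; $(x_ix_{i+1})^4=(y_iy_{i+1})^4=e$ for $1\le i\le n-1$; $(x_iy_i)^3=e$ for $1\le i\le n$; $(zt)^2=e$ for every other pair of distinct $z,t\in X$; $(x_ix_{i+1}y_i)^3=(x_ix_{i+1}y_{i+1})^3=(x_iy_iy_{i+1})^3=(x_{i+1}y_iy_{i+1})^3=e$ for $1\le i\le n-1$; and $(x_ix_{i+1}x_{i+2})^4=(y_iy_{i+1}y_{i+2})^4=e$ for $1\le i\le n-2$. *)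

(* Defs.v *)
From HB Require Import structures.
From mathcomp Require Import all_boot all_order all_algebra all_fingroup.
Set Implicit Arguments. Unset Strict Implicit. Unset Printing Implicit Defensive.
Import GRing.Theory.
Local Open Scope ring_scope.

(* Generators of <A_{2,n}>, 0-based indices: (false, i) = x_{i+1}, (true, i) = y_{i+1}. *)
Definition gen (n : nat) := (bool * 'I_n)%type.
Definition gx {n} (i : 'I_n) : gen n := (false, i).
Definition gy {n} (i : 'I_n) : gen n := (true, i).

Definition wpow {T} (m : nat) (s : seq T) : seq T := flatten (nseq m s).

(* pairs {x_i,x_{i+1}}, {y_i,y_{i+1}}, {x_i,y_i} (which have their own relation) *)
Definition special_pair {n} (z t : gen n) : bool :=
  ((z.1 == t.1) && ((val z.2 == (val t.2).+1)%N || (val t.2 == (val z.2).+1)%N))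
  || ((z.1 != t.1) && (z.2 == t.2)).

Definition is_relator {n} (w : seq (gen n)) : Prop :=
  (exists z : gen n, w = [:: z; z])
  \/ (exists i j : 'I_n, val j = (val i).+1 /\
        (w = wpow 4 [:: gx i; gx j] \/ w = wpow 4 [:: gy i; gy j]
         \/ w = wpow 3 [:: gx i; gx j; gy i] \/ w = wpow 3 [:: gx i; gx j; gy j]
         \/ w = wpow 3 [:: gx i; gy i; gy j] \/ w = wpow 3 [:: gx j; gy i; gy j]))
  \/ (exists i : 'I_n, w = wpow 3 [:: gx i; gy i])
  \/ (exists z t : gen n, z != t /\ ~~ special_pair z t /\ w = wpow 2 [:: z; t])
  \/ (exists i j k : 'I_n, val j = (val i).+1 /\ val k = (val j).+1 /\
        (w = wpow 4 [:: gx i; gx j; gx k] \/ w = wpow 4 [:: gy i; gy j; gy k])).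

(* Equality in the presented group: the congruence on words generated by
   the relators (since every generator is an involution, words in X without
   formal inverses represent every element). *)
Inductive word_eq {n} : seq (gen n) -> seq (gen n) -> Prop :=
| weq_refl w : word_eq w w
| weq_sym u v : word_eq u v -> word_eq v u
| weq_trans u v w : word_eq u v -> word_eq v w -> word_eq u w
| weq_rel u r v : is_relator r -> word_eq (u ++ r ++ v) (u ++ v).

(* phi on generators, in M_{n+1}(F_2); 0-based: x_i -> I + E_{i+1,i}, y_i -> I + E_{i,i+1} *)
Definition phi_gen {n} (z : gen n) : 'M['F_2]_(n.+1) :=
  let i : 'I_n.+1 := inord (val z.2) in
  let j : 'I_n.+1 := inord (val z.2).+1 in
  if z.1 then 1%:M + delta_mx i j else 1%:M + delta_mx j i.

Definition phi_word {n} (w : seq (gen n)) : 'M['F_2]_(n.+1) :=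
  \prod_(z <- w) phi_gen z.

(* Main.v *)
Require Import Defs.
From mathcomp Require Import all_boot all_order all_algebra all_fingroup zify.
Local Open Scope ring_scope.
Import GRing.Theory.
Set Implicit Arguments. Unset Strict Implicit.

Lemma natr_xor (a b : bool) : ((a (+) b)%:R : 'F_2) = a%:R + b%:R.
Proof. case: a; case: b => /=; rewrite ?addr0 ?add0r //. by apply/val_inj. Qed.

Lemma natr_and (a b : bool) : ((a && b)%:R : 'F_2) = a%:R * b%:R.
Proof. by rewrite -natrM mulnb. Qed.

Lemma natr_fold (bs : seq bool) : ((foldr addb false bs)%:R : 'F_2) = \sum_(b <- bs) b%:R.
Proof. elim: bs => [|b bs IH]; first by rewrite big_nil. by rewrite big_cons -IH -natr_xor. Qed.

Definition sget (A : seq (seq bool)) (r c : nat) := nth false (nth [::] A r) c.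
Definition smk w (f : nat -> nat -> bool) := mkseq (fun r => mkseq (fun c => f r c) w) w.
Lemma sget_mk w f r c : (r < w)%N -> (c < w)%N -> sget (smk w f) r c = f r c.
Proof. by move=> hr hc; rewrite /sget /smk !nth_mkseq. Qed.
Definition smul w A B := smk w (fun r c => foldr addb false [seq sget A r k && sget B k c | k <- iota 0 w]).
Definition sid w := smk w (fun r c => r == c).
Definition sel w p q := smk w (fun r c => (r == c) (+) ((r == p) && (c == q))).

Definition inw (i w r : nat) := (i <= r < i + w)%N.
Definition embf (i w : nat) A (r c : nat) : 'F_2 :=
  (if inw i w r && inw i w c then sget A (r - i) (c - i) else (r == c))%:R.
Definition emb n i w A : 'M['F_2]_n.+1 := \matrix_(r, c) embf i w A r c.

Lemma embf_out i w A r c : inw i w r != inw i w c -> embf i w A r c = 0.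
Proof.
move=> h; have hrc : (r == c) = false by apply/eqP => e; move: h; rewrite e eqxx.
rewrite /embf; move: h; case: (inw i w r); case: (inw i w c) => //= _; by rewrite hrc.
Qed.

Lemma emb_mul n i w A B : (i + w <= n.+1)%N ->
  emb n i w A * emb n i w B = emb n i w (smul w A B).
Proof.
move=> hw; rewrite -mulmxE; apply/matrixP => r c; rewrite !mxE.
under eq_bigr do rewrite !mxE.
have [hr|hr] := boolP (inw i w r).
- rewrite -(big_mkord xpredT (fun k => embf i w A r k * embf i w B k c)).
  rewrite (@big_cat_nat _ _ _ i) //=; last by lia.
  rewrite (@big_cat_nat _ _ _ (i + w) i) //=; last by lia.
  rewrite big1_seq ?add0r; last first.
    move=> k /andP[_]; rewrite mem_index_iota => /andP[_ hk].
    by rewrite embf_out ?mul0r // hr /inw; apply/negbT; lia.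
  rewrite [X in _ + X]big1_seq ?addr0; last first.
    move=> k /andP[_]; rewrite mem_index_iota => /andP[hk _].
    by rewrite embf_out ?mul0r // hr /inw; apply/negbT; lia.
  rewrite -{1}(add0n i) big_addn addKn.
  have [hc|hc] := boolP (inw i w c).
  + rewrite /embf hr hc /= sget_mk; first last.
      by move: hc; rewrite /inw; lia.
      by move: hr; rewrite /inw; lia.
    rewrite natr_fold big_map /index_iota subn0.
    apply: eq_big_seq => k; rewrite mem_iota => hk.
    have hk' : inw i w (k + i) by rewrite /inw; lia.
    by rewrite hk' /= natr_and addnK.
  + rewrite big1_seq; first by rewrite embf_out // hr hc.
    move=> k /andP[_]; rewrite mem_index_iota => hk.
    have hk' : inw i w (k + i) by rewrite /inw; lia.
    by rewrite [embf _ _ B _ _]embf_out ?mulr0 // (negbTE hc) hk'.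
- rewrite (bigD1 r) //= big1 ?addr0; last first.
    move=> k /negbTE hk; rewrite /embf (negbTE hr) /=.
    have -> : (nat_of_ord r == k) = false by rewrite eq_sym; exact hk.
    by rewrite mul0r.
  by rewrite /embf (negbTE hr) /= eqxx mul1r.
Qed.

Lemma emb_id n i w : emb n i w (sid w) = 1.
Proof.
apply/matrixP => r c; rewrite !mxE /embf.
case: ifP => [/andP[hr hc]|_] //.
rewrite sget_mk; last (by move: hc; rewrite /inw; lia); last by move: hr; rewrite /inw; lia.
congr (_ %:R); rewrite -val_eqE /=; move: hr hc; rewrite /inw => hr hc; case: eqP => h1; case: eqP => h2 //; exfalso; lia.
Qed.

Definition Pz {n} (z : gen n) : nat := if z.1 then val z.2 else (val z.2).+1.
Definition Qz {n} (z : gen n) : nat := if z.1 then (val z.2).+1 else val z.2.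

Lemma phi_genE n (z : gen n) r c :
  phi_gen z r c = ((r == c :> nat) (+) ((r == Pz z :> nat) && (c == Qz z :> nat)))%:R.
Proof.
have hk := ltn_ord z.2.
rewrite natr_xor /phi_gen /Pz /Qz; case: z.1; rewrite !mxE;
  by rewrite -!val_eqE /= !inordK //; lia.
Qed.

Lemma phi_gen_emb n (z : gen n) i w a b : Pz z = (i + a)%N -> Qz z = (i + b)%N ->
  (a < w)%N -> (b < w)%N -> phi_gen z = emb n i w (sel w a b).
Proof.
move=> hP hQ ha hb; apply/matrixP => r c; rewrite phi_genE mxE /embf hP hQ.
case: ifP => [/andP[hr hc]|h].
  rewrite sget_mk; last (by move: hc; rewrite /inw; lia); last by move: hr; rewrite /inw; lia.
  congr (_ %:R); congr addb.
    by apply/idP/idP => /eqP h; apply/eqP; move: hr hc h; rewrite /inw; lia.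
  by congr andb; apply/idP/idP => /eqP h; apply/eqP; move: hr hc h; rewrite /inw; lia.
case: andP => [[/eqP e1 /eqP e2]|_]; last by rewrite addbF.
exfalso; move: h; rewrite /inw e1 e2; lia.
Qed.

Lemma phi_gx n (k : 'I_n) i w a : val k = (i + a)%N -> (a.+1 < w)%N ->
  phi_gen (gx k) = emb n i w (sel w a.+1 a).
Proof. move=> hk ha; apply: phi_gen_emb; rewrite /Pz /Qz /= ?hk ?addnS //; lia. Qed.

Lemma phi_gy n (k : 'I_n) i w a : val k = (i + a)%N -> (a.+1 < w)%N ->
  phi_gen (gy k) = emb n i w (sel w a a.+1).
Proof. move=> hk ha; apply: phi_gen_emb; rewrite /Pz /Qz /= ?hk ?addnS //; lia. Qed.

Lemma phi_sq n (z : gen n) : phi_gen z * phi_gen z = 1.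
Proof.
case: z => [[] k].
- rewrite (@phi_gy n k k 2 0) ?addn0 // emb_mul; last by have := ltn_ord k; lia.
  by rewrite -(emb_id n k 2); congr emb; vm_compute.
- rewrite (@phi_gx n k k 2 0) ?addn0 // emb_mul; last by have := ltn_ord k; lia.
  by rewrite -(emb_id n k 2); congr emb; vm_compute.
Qed.

Lemma inord_neq n a b : (a <= n)%N -> (b <= n)%N -> a != b -> (inord a : 'I_n.+1) != inord b.
Proof. by move=> ha hb hab; rewrite -val_eqE /= !inordK. Qed.

Lemma phi_comm n (z t : gen n) : ~~ special_pair z t ->
  phi_gen z * phi_gen t = phi_gen t * phi_gen z.
Proof.
case: z => [bz kz]; case: t => [bt kt]; rewrite /special_pair /= => hsp.
have hz := ltn_ord kz; have ht := ltn_ord kt.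
move: hsp; case: bz; case: bt => /= hsp;
rewrite /phi_gen /= -!mulmxE !mulmxDl !mulmxDr !mul1mx !mulmx1.
all: rewrite !mul_delta_mx_0 ?addr0; try by rewrite addrAC.
all: apply: inord_neq; try lia.
all: move: hsp; rewrite -?val_eqE /=; lia.
Qed.

Lemma phi_word_cons n (z : gen n) s : phi_word (z :: s) = phi_gen z * phi_word s.
Proof. by rewrite /phi_word big_cons. Qed.
Lemma phi_word_nil n : phi_word ([::] : seq (gen n)) = 1.
Proof. by rewrite /phi_word big_nil. Qed.

Lemma rel_one n (r : seq (gen n)) : is_relator r -> phi_word r = 1.
Proof.
case=> [[z ->]|[[i [j [hj H]]]|[[i ->]|[[z [t [hzt [hsp ->]]]]|[i [j [k [hj [hk H]]]]]]]]].
- by rewrite !phi_word_cons phi_word_nil mulr1 phi_sq.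
- have hj' : nat_of_ord j = (nat_of_ord i).+1 := hj.
  have hw : (i + 3 <= n.+1)%N by have := ltn_ord j; lia.
  have hxi := @phi_gx n i i 3 0 (esym (addn0 _)) isT.
  have hyi := @phi_gy n i i 3 0 (esym (addn0 _)) isT.
  have hxj := @phi_gx n j i 3 1 ltac:(rewrite hj addn1 //) isT.
  have hyj := @phi_gy n j i 3 1 ltac:(rewrite hj addn1 //) isT.
  case: H => [->|[->|[->|[->|[->| ->]]]]].
  1-6: rewrite /wpow /= !phi_word_cons phi_word_nil.
  1-6: repeat match goal with H : phi_gen _ = _ |- _ => progress rewrite H end.
  1-6: rewrite -{1}(emb_id n i 3) !emb_mul //.
  1-6: rewrite (_ : smul _ _ _ = sid 3); [exact: emb_id | vm_compute; reflexivity].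
- have hw : (i + 2 <= n.+1)%N by have := ltn_ord i; lia.
  have hxi := @phi_gx n i i 2 0 (esym (addn0 _)) isT.
  have hyi := @phi_gy n i i 2 0 (esym (addn0 _)) isT.
  1: rewrite /wpow /= !phi_word_cons phi_word_nil.
  1: repeat match goal with H : phi_gen _ = _ |- _ => progress rewrite H end.
  1: rewrite -{1}(emb_id n i 2) !emb_mul //.
  1: rewrite (_ : smul _ _ _ = sid 2); [exact: emb_id | vm_compute; reflexivity].
- rewrite /wpow /= !phi_word_cons phi_word_nil mulr1.
  by rewrite [phi_gen t * (_ * _)]mulrA -phi_comm // !mulrA phi_sq mul1r phi_sq.
- have hj' : nat_of_ord j = (nat_of_ord i).+1 := hj.
  have hk' : nat_of_ord k = (nat_of_ord j).+1 := hk.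
  have hw : (i + 4 <= n.+1)%N by have := ltn_ord k; lia.
  have hxi := @phi_gx n i i 4 0 (esym (addn0 _)) isT.
  have hyi := @phi_gy n i i 4 0 (esym (addn0 _)) isT.
  have hxj := @phi_gx n j i 4 1 ltac:(rewrite hj addn1 //) isT.
  have hyj := @phi_gy n j i 4 1 ltac:(rewrite hj addn1 //) isT.
  have hxk := @phi_gx n k i 4 2 ltac:(rewrite hk hj addn2 //) isT.
  have hyk := @phi_gy n k i 4 2 ltac:(rewrite hk hj addn2 //) isT.
  case: H => ->.
  1-2: rewrite /wpow /= !phi_word_cons phi_word_nil.
  1-2: repeat match goal with H : phi_gen _ = _ |- _ => progress rewrite H end.
  1-2: rewrite -{1}(emb_id n i 4) !emb_mul //.
  1-2: rewrite (_ : smul _ _ _ = sid 4); [exact: emb_id | vm_compute; reflexivity].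
Qed.

Unset Implicit Arguments.
Theorem proposition2 (n : nat) (hn : (0 < n)%N) :
  (forall z : gen n, phi_gen z \in unitmx) /\
  (forall u v : seq (gen n), word_eq u v -> phi_word u = phi_word v).
Proof.
split.
  move=> z; have h := phi_sq z; rewrite -mulmxE in h.
  by case: (mulmx1_unit h).
move=> u v; elim=> [w|u' v' _ IH|u' v' w _ IH1 _ IH2|u' r v' hr];
  [by []|by rewrite IH|by rewrite IH1 IH2|].
rewrite /phi_word !big_cat /=.
by rewrite -/(phi_word r) rel_one // mul1r.
Qed.
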